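(* Let $0<f_1\le\dots\le f_n$ be opening costs depending on $n$, $\kappa=\max\{i\in[n]: f_i<1/(i-1)\}$ and $F_\kappa=\sum_{i=1}^\kappa f_i$. Suppose that $F_\kappa\in O(\ln(n))$ and set $m:=2n-1$. Then for sufficiently large $n$, $$F_\kappa+\int_{F_\kappa}^\infty\sqrt{1-\left(1-e^{-(x-F_\kappa)}\right)^{n-1}}\,\mathrm{d}x\le 2\sqrt{em}.$$
   Context: In the definition of $\kappa$, $1/(i-1)$ for $i=1$ is interpreted as $+\infty$. Asymptotic notation refers to $n\to\infty$. *)

(* Defs.v *)
From HB Require Import structures.
From mathcomp Require Import all_boot all_order all_algebra.
From mathcomp Require Import all_classical all_reals all_analysis.
Set Implicit Arguments. Unset Strict Implicit. Unset Printing Implicit Defensive.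
Import Order.TTheory GRing.Theory Num.Theory.
Local Open Scope ring_scope.

(* Opening costs f_1,...,f_n are given as a function [f : nat -> R] indexed
   from 1 (values f 0 and f i for i > n are irrelevant). *)

(* kappa = max { i in [n] : f_i < 1/(i-1) }, where 1/(i-1) = +oo for i = 1,
   so i = 1 always qualifies (for n >= 1). *)
Definition kappa (R : realType) (n : nat) (f : nat -> R) : nat :=
  (\max_(1 <= i < n.+1 | (i == 1)%N || (f i < 1 / (i.-1)%:R)%R) i)%N.

Definition Fkappa (R : realType) (n : nat) (f : nat -> R) : R :=
  \sum_(1 <= i < (kappa n f).+1) f i.

(* Main.v *)
Require Import Defs.
From HB Require Import structures.
From mathcomp Require Import all_boot all_order all_algebra.
From mathcomp Require Import all_classical all_reals all_analysis.
From mathcomp Require Import measurable_realfun.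
From mathcomp.algebra_tactics Require Import ring lra.
From mathcomp Require Import zify.
Import Order.TTheory GRing.Theory Num.Theory.
Local Open Scope ring_scope.
Local Open Scope classical_set_scope.

Module Aux.
Import Num.Def.
Import numFieldTopology.Exports.
Section S.
Context {R : realType}.
Lemma dexp (c x : R) : is_derive x 1 (fun y => expR (- c * y)) (- c * expR (- c * x)).
Proof.
have h1 : is_derive x 1 (fun y : R => - c * y) (- c).
  have := @is_deriveZ R R R id (-c) x 1 1 (is_derive_id _ _).
  by rewrite /GRing.scale /= mulr1.
have := @is_derive1_comp R expR (fun y => - c * y) x _ _ _ h1.
by move=> H; rewrite mulrC; exact: H.
Qed.
Lemma dG (K c x : R) : is_derive x 1 (fun y => K * - expR (- c * y)) (K * (c * expR (- c * x))).
Proof.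
have := @is_deriveZ R R R (fun y => - expR (- c * y)) K x 1 _ (is_deriveN (dexp c x)).
move=> H.
have E : K *: - (- c * expR (- c * x)) = K * (c * expR (- c * x)) by rewrite /GRing.scale /= mulNr opprK.
rewrite -E.
exact H.
Qed.

Let cexpNM (c : R) : continuous (fun z : R^o => expR (- c * z)).
Proof.
move=> z; apply: continuous_comp; last exact: continuous_expR.
by apply: continuousM => //; apply: (@continuousN _ R^o); exact: cst_continuous.
Qed.

Let cKexp (K c : R) : continuous (fun x : R^o => K * (c * expR (- c * x))).
Proof.
move=> x.
apply: (@continuousM _ R^o (fun=> K) (fun x => c * expR (- c * x))); first exact: cst_continuous.
apply: (@continuousM _ R^o (fun=> c)); first exact: cst_continuous.
exact: cexpNM.
Qed.

Lemma ftc_exp (K c a : R) : 0 <= K -> 0 < c ->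
  (\int[lebesgue_measure]_(x in `[a, +oo[) (K * (c * expR (- c * x)))%:E
     = (K * expR (- c * a))%:E)%E.
Proof.
move=> K0 c0.
rewrite (@ge0_continuous_FTC2y _ _ (fun x => K * (- expR (- c * x))) _ 0)//.
- by rewrite mulrN EFinN sub0e oppeK.
- by move=> x _; rewrite mulr_ge0// mulr_ge0// ?ltW// expR_ge0.
- apply: continuous_subspaceT; exact: cKexp.
- rewrite -[X in _ --> X](mulr0 K) ; apply: cvgMr.
  rewrite -oppr0; apply: cvgN.
  rewrite (_ : (fun x => expR (- c * x)) =
               (fun z => expR (- z)) \o (fun z => c * z)); last first.
    by apply: eq_fun => x; rewrite mulNr.
  apply: (@cvg_comp _ _ _ _ _ _ (pinfty_nbhs R)); last exact: cvgr_expR.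
  exact: gt0_cvgMry.
- apply: cvg_at_right_filter; apply: cvgMr; apply: cvgN; exact: cexpNM.
- move=> z _.
  by rewrite derive1E; case: (dG K c z).
Qed.

Lemma bern (k : nat) (t : R) : 0 <= t <= 1 -> 1 - (1 - t) ^+ k <= k%:R * t.
Proof.
case/andP=> t0 t1; elim: k => [|k IH]; first by rewrite expr0 subrr mul0r.
rewrite exprSr.
have h1 : 0 <= 1 - t by lra.
have := ler_wpM2r h1 (_ : 1 - k%:R * t <= (1 - t) ^+ k); move/(_ ltac:(lra)) => h2.
have h3 : 0 <= k%:R * t * t by rewrite mulr_ge0// mulr_ge0.
rewrite -natr1. nra.
Qed.

Lemma int_bound (F : R) (k : nat) :
 (\int[lebesgue_measure]_(x in `[F, +oo[) (Num.sqrt (1 - (1 - expR (- (x - F))) ^+ k))%:E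
   <= (2 * Num.sqrt k%:R)%:E)%E.
Proof.
set c : R := 2^-1.
have c0 : 0 < c by rewrite /c invr_gt0.
set K : R := 2 * Num.sqrt k%:R * expR (c * F).
have K0 : 0 <= K by rewrite /K mulr_ge0 ?expR_ge0// mulr_ge0.
have ch : continuous (fun x : R => Num.sqrt (1 - (1 - expR (- (x - F))) ^+ k)).
  move=> x.
  apply: (@continuous_comp _ _ _ (fun x : R => 1 - (1 - expR (- (x - F))) ^+ k) Num.sqrt); last exact: sqrt_continuous.
  apply: (@continuousB _ R^o _ (fun=> 1) (fun x : R => (1 - expR (- (x - F))) ^+ k)); first exact: cst_continuous.
  apply: (@continuous_comp _ _ _ (fun x : R => (1 - expR (- (x - F)))) (fun y : R => y ^+ k)); last exact: exprn_continuous.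
  apply: (@continuousB _ R^o _ (fun=> 1) (fun x : R => expR (- (x - F)))); first exact: cst_continuous.
  apply: (@continuous_comp _ _ _ (fun x : R => - (x - F)) expR); last exact: continuous_expR.
  apply: (@continuousN _ R^o _ (fun x : R => x - F)).
  apply: (@continuousB _ R^o _ id (fun=> F)); last exact: cst_continuous.
  exact: cvg_id.
have H : (\int[lebesgue_measure]_(x in `[F, +oo[) (Num.sqrt (1 - (1 - expR (- (x - F))) ^+ k))%:E
   <= \int[lebesgue_measure]_(x in `[F, +oo[) (K * (c * expR (- c * x)))%:E)%E.
  apply: ge0_le_integral => //.
  - apply/measurable_EFinP; apply: measurable_funTS; exact: continuous_measurable_fun.
  - apply/measurable_EFinP; apply: measurable_funTS; apply: continuous_measurable_fun.
    exact: cKexp.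
  - move=> x; rewrite /= in_itv /= andbT => Fx.
    rewrite lee_fin.
    set u := expR (- (c * (x - F))).
    have tE : expR (- (x - F)) = u ^+ 2.
      by rewrite /u -expRM_natl; congr expR; rewrite /c; field.
    have gE : K * (c * expR (- c * x)) = Num.sqrt k%:R * u.
      have -> : u = expR (c * F) * expR (- c * x) by rewrite /u -expRD; congr expR; ring.
      by rewrite /K /c; field.
    rewrite gE tE.
    have u0 : 0 <= u by exact: expR_ge0.
    have hb : 0 <= u ^+ 2 <= 1.
      by rewrite -tE expR_ge0 /= expR_le1; lra.
    apply: (@le_trans _ _ (Num.sqrt (k%:R * u ^+ 2))).
      by apply: ler_wsqrtr; exact: bern.
    by rewrite sqrtrM// sqrtr_sqr ger0_norm.
apply: le_trans H _.
rewrite ftc_exp// lee_fin /K -(mulrA (2 * _)) -expRD.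
have -> : c * F + - c * F = 0 by ring.
by rewrite expR0 mulr1.
Qed.
End S.

Lemma final_ineq (R : realType) (n : nat) (F : R) :
  (2 <= n)%N -> F <= Num.sqrt n%:R ->
  F + 2 * Num.sqrt (n - 1)%:R <= 2 * Num.sqrt (expR 1 * (2 * n - 1)%:R).
Proof.
move=> n2 hF.
have hs : Num.sqrt (n - 1)%:R <= Num.sqrt (n%:R : R).
  by apply: ler_wsqrtr; rewrite ler_nat leq_subr.
have e2 : 2 <= expR (1 : R) by have := expR_ge1Dx (1 : R); lra.
have mE : ((2 * n - 1)%:R : R) = 2 * n%:R - 1.
  by rewrite natrB ?natrM //; lia.
have n2R : (2 : R) <= n%:R by rewrite ler_nat.
have hsq : 3 * Num.sqrt (n%:R : R) <= 2 * Num.sqrt (expR 1 * (2 * n - 1)%:R).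
  have a0 : 0 <= 3 * Num.sqrt (n%:R : R) by rewrite mulr_ge0// sqrtr_ge0.
  have b0 : 0 <= 2 * Num.sqrt (expR 1 * (2 * n - 1)%:R : R) by rewrite mulr_ge0// sqrtr_ge0.
  rewrite -(@ler_pXn2r _ 2)// ?nnegrE//.
  rewrite !exprMn !sqr_sqrtr ?mulr_ge0 ?expR_ge0// mE.
  have : 0 <= (expR 1 - 2) * (2 * (n%:R : R) - 1) by apply: mulr_ge0; lra.
  rewrite !expr2; nra.
lra.
Qed.


Lemma ln_bound {R : realType} {C : R} {M n : nat} : 4 * `|C| <= M%:R ->
  (M ^ 4 <= n)%N -> (1 <= n)%N -> C * `|ln (n%:R : R)| <= Num.sqrt n%:R.
Proof.
move=> CM Mn n1.
have n0 : (0 : R) < n%:R by rewrite ltr0n.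
set q := Num.sqrt (Num.sqrt (n%:R : R)).
have q0 : 0 < q by rewrite /q !sqrtr_gt0.
have q2 : q ^+ 2 = Num.sqrt n%:R by rewrite sqr_sqrtr// sqrtr_ge0.
have q4 : (n%:R : R) = q ^+ 4.
  by rewrite (_ : 4%N = (2 * 2)%N)// exprM q2 sqr_sqrtr// ltW.
have lnE : ln (n%:R : R) = ln q * 4%:R by rewrite q4 lnXn// mulr_natr.
have lnq : ln q < q by exact: ln_sublinear.
have ln0 : 0 <= ln (n%:R : R) by apply: ln_ge0; rewrite ler1n.
have Mq : M%:R <= q.
  rewrite -(@ler_pXn2r _ 4) //= ?nnegrE ?ler0n ?(ltW q0) //.
  by rewrite -q4 -natrX ler_nat.
have h1 : C * `|ln (n%:R : R)| <= `|C| * ln (n%:R : R).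
  by rewrite (ger0_norm ln0); apply: ler_wpM2r => //; exact: ler_norm.
have h2 : `|C| * ln q <= `|C| * q by apply: ler_wpM2l => //; exact: ltW.
have h3 : (4 * `|C|) * q <= q * q by apply: ler_wpM2r; [exact: ltW | lra].
rewrite -q2 expr2.
have e1 : `|C| * ln (n%:R : R) = 4 * (`|C| * ln q) by rewrite lnE; ring.
have e2 : (4 * `|C|) * q = 4 * (`|C| * q) by ring.
rewrite e1 in h1; rewrite e2 in h3.
lra.
Qed.

End Aux.

Theorem lemma11 (R : realType) (f : nat -> nat -> R)
  (hpos : forall n i, (1 <= i <= n)%N -> 0 < f n i)
  (hmono : forall n i, (1 <= i < n)%N -> f n i <= f n i.+1)
  (hO : exists (C : R) (N : nat), forall n, (N <= n)%N ->
          `|Fkappa n (f n)| <= C * `|ln (n%:R : R)|) :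
  exists N : nat, forall n, (N <= n)%N ->
    let F := Fkappa n (f n) in
    let m : R := (2 * n - 1)%:R in
    (F%:E + \int[lebesgue_measure]_(x in `[F, +oo[)
        (Num.sqrt (1 - (1 - expR (- (x - F))) ^+ (n - 1)))%:E <=
      (2 * Num.sqrt (expR 1 * m))%:E)%E.
Proof.
case: hO => C [N0 HC].
have [M CM] : exists M : nat, 4 * `|C| <= M%:R.
  by exists (Num.Def.truncn (4 * `|C|)).+1; apply: ltW; exact: truncnS_gt.
exists (maxn (maxn N0 2) (M ^ 4)).
move=> n; rewrite !geq_max => /andP[/andP[hN0 h2] hM].
cbv zeta; set F := Fkappa n (f n).
have hF : F <= Num.sqrt n%:R.
  apply: le_trans (ler_norm F) _.
  apply: le_trans (HC n hN0) _.
  exact: (Aux.ln_bound CM hM (leq_trans (isT : (1 <= 2)%N) h2)).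
apply: le_trans (leeD (lexx F%:E) (Aux.int_bound F (n - 1))) _.
rewrite -EFinD lee_fin.
exact: Aux.final_ineq.
Qed.
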